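(* For every $i\ge2$, the Mycielski graph $G_i$ does not occur as an induced subgraph of the enhanced conflict graph of any traffic pattern in a multicast switch.
   Context: Mycielski graphs: $G_0=K_2$ and $G_{i+1}$ is the Mycielskian of $G_i$ (for a graph $H$ on $v_1,\dots,v_n$, add vertices $w_1,\dots,w_n,z$, join $w_j$ to every neighbor of $v_j$, and join $z$ to all $w_j$). Thus $G_1=C_5$, $G_2$ is the Grötzsch graph, $\omega(G_i)=2$, $\chi(G_i)=i+2$. A flow is $(i,J)$ with input $i$ and nonempty fanout $J$ of outputs; subflows are $(i,J,j)$ with $j\in J$. Enhanced conflict graph: one vertex per subflow; distinct subflows $(i,J,j),(i',J',j')$ adjacent iff $j=j'$, or $i=i'$ and $J\ne J'$. *)

(* Defs.v *)
From mathcomp Require Import all_boot.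
Set Implicit Arguments. Unset Strict Implicit. Unset Printing Implicit Defensive.

Fixpoint myc_n (k : nat) : nat :=
  match k with 0 => 2 | k'.+1 => (myc_n k').*2.+1 end.

(* Adjacency of G_k on vertices 0..myc_n k - 1.  In G_{k+1}, with n = myc_n k,
   vertices 0..n-1 are the copies v_j of G_k, n..2n-1 are w_j (w_j = n + j),
   and 2n is z. *)
Fixpoint myc_adj (k : nat) (a b : nat) : bool :=
  match k with
  | 0 => [&& a < 2, b < 2 & a != b]
  | k'.+1 =>
    let n := myc_n k' in
    if (a < n) && (b < n) then myc_adj k' a b
    else if (a < n) && (n <= b < n.*2) then myc_adj k' a (b - n)
    else if (n <= a < n.*2) && (b < n) then myc_adj k' (a - n) b
    else if (a == n.*2) && (n <= b < n.*2) then true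
    else if (n <= a < n.*2) && (b == n.*2) then true
    else false
  end.

Definition mycielski (k : nat) : rel 'I_(myc_n k) :=
  fun a b => myc_adj k a b.

Section Switch.
Variables (In Out : finType).

(* A flow is (i, J) with input i and fanout J; a subflow is (i, J, j). *)
Definition flow := (In * {set Out})%type.
Definition subflow := (In * {set Out} * Out)%type.

Definition traffic_pattern (P : {set flow}) : Prop :=
  forall f, f \in P -> f.2 != set0.

Definition is_subflow (P : {set flow}) (s : subflow) : bool :=
  ((s.1.1, s.1.2) \in P) && (s.2 \in s.1.2).

Definition ecg_adj (s t : subflow) : bool :=
  (s != t) && ((s.2 == t.2) || ((s.1.1 == t.1.1) && (s.1.2 != t.1.2))).

Definition induced_in_ecg (V : finType) (adj : rel V) (P : {set flow}) : Prop :=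
  exists f : V -> subflow,
    [/\ injective f, (forall x, is_subflow P (f x)) &
        (forall x y, x != y -> adj x y = ecg_adj (f x) (f y))].
End Switch.

(* Main.v *)
Require Import Defs.
From mathcomp Require Import all_boot.

Lemma myc_n_mono k : myc_n k <= myc_n k.+1.
Proof. rewrite /= -addnn; apply: leq_trans (leq_addr _ _) (leqnSn _). Qed.

Lemma myc_n_ge m : 11 <= myc_n (m + 2).
Proof. elim: m => // m IH; exact: leq_trans IH (myc_n_mono _). Qed.

Lemma myc_adj_lift m a b : a < 11 -> b < 11 -> myc_adj (m + 2) a b = myc_adj 2 a b.
Proof.
move=> Ha Hb; elim: m => // m IH.
rewrite addSn /= -/(myc_n (m+2)).
by rewrite (leq_trans Ha (myc_n_ge m)) (leq_trans Hb (myc_n_ge m)) /= IH.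
Qed.

Lemma key (In Out : finType) (z a b u v : subflow In Out) :
 a != b -> u != v -> u != z -> v != z -> u != b -> v != b ->
 ecg_adj z a -> ecg_adj z b -> ~~ ecg_adj a b -> ecg_adj u a -> ecg_adj v a -> ~~ecg_adj u v -> ~~ecg_adj u z -> ~~ ecg_adj v z -> ~~ecg_adj u b -> ~~ ecg_adj v b -> a.2 != z.2 -> b.2 != z.2 -> False.
Proof.
case: z => [[zi zJ] zo]; case: a => [[ai aJ] ao]; case: b => [[bi bJ] bo];
case: u => [[ui uJ] uo]; case: v => [[vi vJ] vo].
rewrite /ecg_adj /= => nab nuv nuz nvz nub nvb.
rewrite nab nuv nuz nvz nub nvb /=.
case/andP=> _ Hza; case/andP=> _ Hzb; move=> Hab.
case/andP=> _ Hua; case/andP=> _ Hva.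
move=> Huv Huz Hvz Hub Hvb Hao Hbo.
rewrite eq_sym (negbTE Hao) /= in Hza.
rewrite eq_sym (negbTE Hbo) /= in Hzb.
case/andP: Hza => /eqP ezi nzaJ.
case/andP: Hzb => /eqP ezb nzbJ.
subst ai bi.
have eJ : aJ = bJ.
  by move: Hab; rewrite eqxx /= negb_or negbK => /andP[_ /eqP].
subst bJ.
have Hu : uo = ao.
  case/orP: Hua => [/eqP //|/andP[/eqP eu nuJ]]; subst ui.
  move: Huz; rewrite eqxx /= negb_or negbK => /andP[_ /eqP euJ]; subst uJ.
  by move: Hub; rewrite eqxx eq_sym nzaJ orbT.
have Hv : vo = ao.
  case/orP: Hva => [/eqP //|/andP[/eqP eu nuJ]]; subst vi.
  move: Hvz; rewrite eqxx /= negb_or negbK => /andP[_ /eqP euJ]; subst vJ.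
  by move: Hvb; rewrite eqxx eq_sym nzaJ orbT.
by move: Huv; rewrite Hu Hv eqxx.
Qed.

Theorem corollary2 (k : nat) (Hk : 2 <= k) (In Out : finType)
    (P : {set flow In Out}) :
  traffic_pattern P -> ~ induced_in_ecg (@mycielski k) P.
Proof.
have [m ->] : exists m, k = m + 2 by exists (k - 2); rewrite subnK.
move=> _ [f [finj _ fadj]].
have Hn := myc_n_ge m.
pose F (x : 'I_11) := f (widen_ord Hn x).
have Fadj (x y : 'I_11) : x != y -> myc_adj 2 x y = ecg_adj (F x) (F y).
  move=> nxy; rewrite -fadj; last first.
    by apply: contra nxy => /eqP /(congr1 val) /= e; apply/eqP/val_inj.
  by rewrite /mycielski /= myc_adj_lift.
have Fne (x y : 'I_11) : x != y -> F x != F y.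
  move=> nxy; apply: contra nxy => /eqP /finj /(congr1 val) /= e.
  by apply/eqP/val_inj.
pose o (i : nat) (H : i < 11) := Ordinal H.
have A (x y : 'I_11) : x != y -> myc_adj 2 x y -> ecg_adj (F x) (F y).
  by move=> nxy; rewrite Fadj.
have N (x y : 'I_11) : x != y -> ~~ myc_adj 2 x y -> ~~ ecg_adj (F x) (F y).
  by move=> nxy; rewrite Fadj.
set z := o 10 isT.
have Hc : forall a b u v : 'I_11,
  a != b -> u != v -> u != z -> v != z -> u != b -> v != b ->
  myc_adj 2 z a -> myc_adj 2 z b -> ~~ myc_adj 2 a b -> myc_adj 2 u a -> myc_adj 2 v a ->
  ~~ myc_adj 2 u v -> ~~ myc_adj 2 u z -> ~~ myc_adj 2 v z -> ~~ myc_adj 2 u b -> ~~ myc_adj 2 v b ->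
  z != a -> z != b -> u != a -> v != a ->
  (F a).2 != (F z).2 -> (F b).2 != (F z).2 -> False.
  move=> a b u v nab nuv nuz nvz nub nvb h1 h2 h3 h4 h5 h6 h7 h8 h9 h10 nza nzb nua nva.
  exact: (@key _ _ _ _ _ _ _ (Fne _ _ nab) (Fne _ _ nuv) (Fne _ _ nuz) (Fne _ _ nvz) (Fne _ _ nub) (Fne _ _ nvb)
    (A _ _ nza h1) (A _ _ nzb h2) (N _ _ nab h3) (A _ _ nua h4) (A _ _ nva h5)
    (N _ _ nuv h6) (N _ _ nuz h7) (N _ _ nvz h8) (N _ _ nub h9) (N _ _ nvb h10)).
have Wdist (a b : 'I_11) : a != b -> ~~ myc_adj 2 a b -> (F a).2 == (F z).2 -> (F b).2 != (F z).2.
  move=> nab hn /eqP ea; apply/negP => /eqP eb.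
  by have := N a b nab hn; rewrite /ecg_adj (Fne _ _ nab) /= ea eb eqxx.
case Ha : ((F (o 5 isT)).2 == (F z).2).
  have H7 := Wdist (o 5 isT) (o 7 isT) isT isT Ha.
  have H9 := Wdist (o 5 isT) (o 9 isT) isT isT Ha.
  exact: (Hc (o 7 isT) (o 9 isT) (o 1 isT) (o 4 isT) isT isT isT isT isT isT isT isT isT isT isT isT isT isT isT isT isT isT isT isT  H7 H9).
case Hb : ((F (o 6 isT)).2 == (F z).2).
  have H7 := Wdist (o 6 isT) (o 7 isT) isT isT Hb.
  have H9 := Wdist (o 6 isT) (o 9 isT) isT isT Hb.
  exact: (Hc (o 7 isT) (o 9 isT) (o 1 isT) (o 4 isT) isT isT isT isT isT isT isT isT isT isT isT isT isT isT isT isT isT isT isT isT  H7 H9).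
exact: (Hc (o 5 isT) (o 6 isT) (o 1 isT) (o 3 isT) isT isT isT isT isT isT isT isT isT isT isT isT isT isT isT isT isT isT isT isT  (negbT Ha) (negbT Hb)).
Qed.
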